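(* Let $\mathcal P$ be finite, $\sigma$ a switching signal, and $a_p^i:\mathbb R_{\ge0}\to\mathbb R$ ($i\in\{1,\dots,m\}$, $p\in\mathcal P$) locally Lebesgue integrable functions. (1) Let $\hat a_p^i:=\limsup_{t\to\infty:\,\sigma(t)=p}a_p^i(t)$. If $\hat a_p^i$ is finite for all $i$ and all $p\in\mathcal P_\infty$, then $$\limsup_{T\to\infty}\sum_{i=1}^m\frac1T\max_{t\in[0,T]}\sum_{p\in\mathcal P}\int_0^ta_p^i(s)\mathbf 1[\sigma(s)=p]\,ds\le\limsup_{T\to\infty}\sum_{i=1}^m\frac1T\max_{t\in[0,T]}\sum_{p\in\mathcal P_+}\hat a_p^i\tau_p(t).$$ (2) Let $\check a_p^i:=\liminf_{t\to\infty:\,\sigma(t)=p}a_p^i(t)$. If $\check a_p^i$ is finite for all $i$ and all $p\in\mathcal P_\infty$, then $$\limsup_{T\to\infty}\sum_{i=1}^m\frac1T\max_{t\in[0,T]}\sum_{p\in\mathcal P}\int_0^ta_p^i(s)\mathbf 1[\sigma(s)=p]\,ds\ge\limsup_{T\to\infty}\sum_{i=1}^m\frac1T\max_{t\in[0,T]}\sum_{p\in\mathcal P_+}\check a_p^i\tau_p(t)$$ and $$\limsup_{t\to\infty}\sum_{i=1}^m\max\Big\{\frac1t\sum_{p\in\mathcal P}\int_0^ta_p^i(s)\mathbf 1[\sigma(s)=p]\,ds,\,0\Big\}\ge\limsup_{t\to\infty}\sum_{i=1}^m\max\Big\{\sum_{p\in\mathcal P_+}\check a_p^i\rho_p(t)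,\,0\Big\}.$$
   Context: A switching signal is a right-continuous piecewise-constant $\sigma:\mathbb R_{\ge0}\to\mathcal P$ with finitely many switches in every bounded interval. $\tau_p(t):=\int_0^t\mathbf 1[\sigma(s)=p]ds$, $\rho_p(t):=\tau_p(t)/t$ for $t>0$ ($\rho_p(0):=\mathbf 1[\sigma(0)=p]$), $\hat\rho_p:=\limsup_{t\to\infty}\rho_p(t)$, $\mathcal P_\infty:=\{p:\sup\{t\ge0:\sigma(t)=p\}=\infty\}$, $\mathcal P_+:=\{p:\hat\rho_p>0\}$. $\limsup_{t\to\infty:\sigma(t)=p}g(t):=\lim_{s\to\infty}\sup\{g(t):t\ge s,\sigma(t)=p\}$, and analogously for $\liminf$. *)

(* Defs.v *)
From HB Require Import structures.
From mathcomp Require Import all_boot all_order all_algebra.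
From mathcomp Require Import all_classical all_reals all_analysis.
Set Implicit Arguments. Unset Strict Implicit. Unset Printing Implicit Defensive.
Import Order.TTheory GRing.Theory Num.Theory.
Import numFieldNormedType.Exports.
Local Open Scope classical_set_scope.
Local Open Scope ring_scope.

Section Defs.
Context {R : realType} {P : finType}.

(* sigma is right-continuous piecewise constant with finitely many switches
   in every bounded interval: for every T > 0 there is a finite partition
   0 = t_0 < t_1 < ... < t_n = T of [0,T] such that sigma is constant on each
   [t_k, t_{k+1}). *)
Definition switching_signal (sigma : R -> P) : Prop :=
  forall T : R, 0 < T -> exists ts : seq R,
    [/\ sorted <%R ts, head 0 ts = 0, last 0 ts = T, (1 < size ts)%N &
        forall k : nat, (k.+1 < size ts)%N -> forall t : R,
          nth 0 ts k <= t < nth 0 ts k.+1 -> sigma t = sigma (nth 0 ts k)].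

Definition loc_integrable (f : R -> R) : Prop :=
  forall T : R, 0 <= T -> (lebesgue_measure : measure _ R).-integrable `[0, T] (EFin \o f).

Definition integ0 (f : R -> R) (t : R) : R :=
  Rintegral (lebesgue_measure : measure _ R) `[0, t] f.

Definition ind (sigma : R -> P) (p : P) (s : R) : R := (sigma s == p)%:R.

Definition tau (sigma : R -> P) (p : P) (t : R) : R := integ0 (ind sigma p) t.

Definition rho (sigma : R -> P) (p : P) (t : R) : R :=
  if 0 < t then tau sigma p t / t else ind sigma p 0.

Definition limsup_on (A : set R) (g : R -> \bar R) : \bar R :=
  lim ((fun s : R => ereal_sup (g @` [set t | s <= t /\ A t])) x @[x --> +oo]).
Definition liminf_on (A : set R) (g : R -> \bar R) : \bar R :=
  lim ((fun s : R => ereal_inf (g @` [set t | s <= t /\ A t])) x @[x --> +oo]).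

Definition limsup_inf (g : R -> \bar R) : \bar R := limsup_on setT g.

Definition rho_hat (sigma : R -> P) (p : P) : \bar R :=
  limsup_inf (fun t => (rho sigma p t)%:E).

Definition P_inf (sigma : R -> P) (p : P) : Prop :=
  ereal_sup (EFin @` [set t | 0 <= t /\ sigma t = p]) = +oo%E.

Definition P_plus (sigma : R -> P) (p : P) : Prop := (0 < rho_hat sigma p)%E.

(* max_{t in [0,T]} g t  (written as a supremum; the functions to which it
   is applied are continuous, so the supremum is attained) *)
Definition max0 (g : R -> R) (T : R) : \bar R := ereal_sup (EFin @` (g @` `[0, T])).

End Defs.

(* Main.v *)
Require Import Defs.
From HB Require Import structures.
From mathcomp Require Import all_boot all_order all_algebra.
From mathcomp Require Import all_classical all_reals all_analysis.
From mathcomp Require Import ring lra.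
Import Order.TTheory GRing.Theory Num.Theory.
Import numFieldNormedType.Exports.
Local Open Scope classical_set_scope.
Local Open Scope ring_scope.

Section Aux.
Context {R : realType}.
Local Open Scope ereal_scope.

Definition supS (A : set R) (g : R -> \bar R) (s : R) :=
  ereal_sup (g @` [set t | (s <= t)%R /\ A t]).
Definition infS (A : set R) (g : R -> \bar R) (s : R) :=
  ereal_inf (g @` [set t | (s <= t)%R /\ A t]).

Lemma limsup_onE A g : limsup_on A g = ereal_inf (range (supS A g)).
Proof.
rewrite /limsup_on; apply: cvg_lim; first exact: ereal_hausdorff.
apply: nonincreasing_cvge => x y xy; apply: ereal_sup_le.
by move=> _ [t [yt At] <-]; exists t => //; split => //; apply: le_trans yt.
Qed.

Lemma liminf_onE A g : liminf_on A g = ereal_sup (range (infS A g)).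
Proof.
rewrite /liminf_on; apply: cvg_lim; first exact: ereal_hausdorff.
apply: nondecreasing_cvge => x y xy; apply: ereal_inf_le_tmp.
by move=> _ [t [yt At] <-]; exists t => //; split => //; apply: le_trans yt.
Qed.

Lemma limsup_lt A g (c : R) : limsup_on A g < c%:E ->
  exists s, forall t, (s <= t)%R -> A t -> g t < c%:E.
Proof.
rewrite limsup_onE => /ereal_inf_lt [_ [s _ <-]] hs; exists s => t st At.
apply: le_lt_trans hs; apply: ereal_sup_ubound; exists t => //.
Qed.

Lemma liminf_gt A g (c : R) : c%:E < liminf_on A g ->
  exists s, forall t, (s <= t)%R -> A t -> c%:E < g t.
Proof.
rewrite liminf_onE => /ereal_sup_gt [_ [s _ <-]] hs; exists s => t st At.
apply: lt_le_trans hs _; apply: ereal_inf_lbound; exists t => //.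
Qed.

Lemma limsup_compare (f g : R -> \bar R) :
  (forall e : R, (0 < e)%R -> exists T0, forall T, (T0 <= T)%R -> f T <= g T + e%:E) ->
  limsup_inf f <= limsup_inf g.
Proof.
move=> H; rewrite /limsup_inf !limsup_onE.
apply/lee_subgt0Pr => e e0; have [T0 HT0] := H e e0.
apply: le_ereal_inf_tmp => _ [s _ <-].
rewrite leeBlDr //.
have ss : (s <= Num.max s T0)%R by rewrite le_max lexx.
have sT : (T0 <= Num.max s T0)%R by rewrite le_max lexx orbT.
apply: (@le_trans _ _ (supS setT f (Num.max s T0))).
  by apply: ereal_inf_lbound; exists (Num.max s T0).
apply: ge_ereal_sup => _ [t [st _] <-].
apply: (le_trans (HT0 t (le_trans sT st))).
apply: leeD2r; apply: ereal_sup_ubound; exists t => //; split => //.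
exact: le_trans st.
Qed.

End Aux.

Lemma cover_seq {R : realType} (d x : R) (s : seq R) (t : R) :
  x <= t < last x s -> exists k, (k < size s)%N /\
    nth d (x :: s) k <= t < nth d (x :: s) k.+1.
Proof.
elim: s x => [|y s IH] x /=.
  by move=> /andP[a b]; have := le_lt_trans a b; rewrite ltxx.
move=> /andP[xt tl].
case: (ltP t y) => [ty|yt].
  by exists 0%N; split => //; rewrite xt ty.
have [|k [ks hk]] := IH y; first by rewrite yt tl.
by exists k.+1; split.
Qed.

Section Ind.
Context {R : realType} {P : finType} (sigma : R -> P) (p : P)
  (sw : switching_signal sigma).

Lemma meas_sig_pos (T : R) : 0 < T ->
  measurable (`[0, T] `&` [set s | sigma s = p]).
Proof.
move=> T0; have [ts [srt h0 hT hsz hc]] := sw _ T0.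
pose F k := if (k.+1 < size ts)%N && (sigma (nth 0 ts k) == p) then
   `[nth 0 ts k, nth 0 ts k.+1[ `&` `[0, T] else set0.
have -> : `[0, T] `&` [set s | sigma s = p] =
   (\bigcup_k F k) `|` ([set T] `&` [set s | sigma s = p]).
  apply/seteqP; split.
  - move=> s [] /= /[!in_itv] /= /andP[s0 sT] sp.
    move: sT; rewrite le_eqVlt => /orP[/eqP sT|sT].
      by right; split.
    left; have ets : ts = 0 :: behead ts by clear -h0 hsz; case: ts h0 hsz => //= x s' ->.
    have [|k [ks hk]] := @cover_seq _ 0 0 (behead ts) s.
      by move: hT; rewrite {1}ets /= => ->; rewrite s0.
    rewrite -ets in hk; have {}ks : (k.+1 < size ts)%N by rewrite ets.
    exists k => //; rewrite /F /= ks /=.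
    have := hc k ks s hk => /= <-; rewrite sp eqxx; split => //.
    by rewrite /= in_itv /= s0 ltW.
  - move=> s [[k _]|[-> sp]].
      rewrite /F; case: ifP => // /andP[ks /eqP sp] [hk hs]; split => //.
      by rewrite -sp; apply: hc => //; move: hk; rewrite /= in_itv.
    by split => //=; rewrite in_itv /= lexx ltW.
apply: measurableU.
  apply: bigcupT_measurable => k; rewrite /F; case: ifP => _ //.
  by apply: measurableI; apply: measurable_itv.
case: (pselect (sigma T = p)) => hp.
  rewrite (_ : _ `&` _ = [set T]) //.
  by apply/seteqP; split => [s [-> _] //|s ->]; split.
rewrite (_ : _ `&` _ = set0) //.
by apply/seteqP; split => [s [-> /hp] //|s].
Qed.

Lemma meas_ind (T : R) : 0 <= T ->
  measurable_fun (`[0, T] : set (measurableTypeR R)) (ind sigma p).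
Proof.
move=> T0; have T1 : 0 < T + 1 by rewrite ltr_wpDl.
apply: (@measurable_funS _ _ _ _ `[0, T + 1]); first exact: measurable_itv.
  by move=> x /=; rewrite !in_itv /= => /andP[-> xT]; rewrite (le_trans xT)// lerDl.
apply: (@eq_measurable_fun _ _ _ _ _ (\1_(`[0, T + 1] `&` [set s | sigma s = p]) : R -> R)).
  move=> x; rewrite inE => xD; rewrite indicE /ind; congr (_ %:R).
  case: (boolP (sigma x == p)) => h; [rewrite mem_set //; split => //; exact/eqP|].
  by rewrite memNset // => -[_ /eqP]; rewrite (negbTE h).
apply: measurable_realfun.measurable_indic; exact: meas_sig_pos.
Qed.

Lemma bounded_ind (D : set R) : [bounded ind sigma p x | x in D].
Proof.
rewrite /bounded_near; near=> M => x _ /=; rewrite /ind.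
have M1 : 1 <= M by near: M; apply: nbhs_pinfty_ge; rewrite num_real.
by case: eqP => _; rewrite ?normr0 ?normr1 //; apply: le_trans M1.
Unshelve. all: by end_near. Qed.

Lemma integ_one (T : R) :
  (lebesgue_measure : measure _ R).-integrable `[0, T] (EFin \o (fun _ : R => (1 : R))).
Proof.
apply: continuous_compact_integrable; first exact: segment_compact.
by apply: continuous_subspaceT => x; apply: cst_continuous.
Qed.

Lemma integ_ind (T : R) : 0 <= T ->
  (lebesgue_measure : measure _ R).-integrable `[0, T] (EFin \o ind sigma p).
Proof.
move=> T0; have mD : measurable (`[0, T] : set (measurableTypeR R)) by exact: measurable_itv.
have i1 := integ_one T.
have := integrableMl mD i1 (meas_ind _ T0) (bounded_ind _).
apply: eq_integrable => // x _ /=; by rewrite mul1e.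
Qed.

Lemma integ_aind (a : R -> R) (T : R) : loc_integrable a -> 0 <= T ->
  (lebesgue_measure : measure _ R).-integrable `[0, T] (EFin \o (fun s => a s * ind sigma p s)).
Proof.
move=> ai T0; have mD : measurable (`[0, T] : set (measurableTypeR R)) by exact: measurable_itv.
have := integrableMl mD (ai T T0) (meas_ind _ T0) (bounded_ind _).
by apply: eq_integrable => // x _ /=.
Qed.

End Ind.

Section Core.
Context {R : realType}.
Notation mu := (lebesgue_measure : measure _ R).

Lemma mitv (i : interval R) : measurable ([set` i] : set (measurableTypeR R)).
Proof. exact: measurable_itv. Qed.

Lemma int0 (D : set (measurableTypeR R)) : measurable D -> mu.-integrable D (EFin \o (fun _ : R => (0 : R))).
Proof. by move=> mD; apply: eq_integrable (integrable0 _ _) => // x. Qed.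

Lemma core_bound (h : R -> R) (s0 : R) :
  (forall T, 0 <= T -> mu.-integrable `[0, T] (EFin \o h)) ->
  0 <= s0 -> (forall s, s0 <= s -> h s <= 0) ->
  exists C, forall t, 0 <= t -> integ0 h t <= C.
Proof.
move=> hi s00 hs; exists (integ0 (fun x => `|h x|) s0).
have small : forall t, 0 <= t <= s0 -> integ0 h t <= integ0 (fun x => `|h x|) s0.
  move=> t /andP[t0 ts].
  apply: (le_trans (ler_norm _)); apply: (le_trans (le_normr_Rintegral (mitv _) (hi t t0))).
  rewrite -subr_ge0 /integ0.
  rewrite (@Rintegral_itvB _ (fun x => `|h x|) (BLeft 0) (BRight s0) t) //.
    by apply: Rintegral_ge0 => x _.
  exact/integrable_norm/hi.
move=> t t0; have [ts|st] := leP t s0; first by apply: small; rewrite t0 ts.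
apply: le_trans (small s0 _); last by rewrite s00 lexx.
rewrite -subr_le0 /integ0.
rewrite (@Rintegral_itvB _ h (BLeft 0) (BRight t) s0) //.
- apply: (@le_trans _ _ (\int[mu]_(x in `]s0, t]) (fun _ => 0 : R) x)).
    apply: le_Rintegral => //.
    + apply: (integrableS (mitv `[0, t]) (mitv `]s0, t]) _ (hi t t0)).
      by move=> x /=; rewrite !in_itv /= => /andP[/ltW/(le_trans s00) -> ->].
    + by apply: eq_integrable (integrable0 _ _) => //; exact: mitv.
    + by move=> x /=; rewrite in_itv /= => /andP[/ltW/hs ? _].
  by rewrite Rintegral_cst ?mul0r //; exact: mitv.
- exact: hi.
- by rewrite bnd_simp ltW.
Qed.

End Core.

Section Tau.
Context {R : realType} {P : finType} (sigma : R -> P) (p : P)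
  (sw : switching_signal sigma).
Notation mu := (lebesgue_measure : measure _ R).

Lemma tau_ge0 t : 0 <= tau sigma p t.
Proof. by apply: Rintegral_ge0 => x _; rewrite /ind ler0n. Qed.

Lemma tau_le t : 0 <= t -> tau sigma p t <= t.
Proof.
move=> t0; apply: (@le_trans _ _ (\int[mu]_(x in `[0, t]) (fun _ => 1 : R) x)).
  apply: le_Rintegral.
  - exact: mitv.
  - exact: (@integ_ind _ _ sigma p sw _ t0).
  - exact: integ_one.
  - by move=> x _; rewrite /ind; case: eqP.
rewrite Rintegral_cst; last exact: mitv.
suff E : fine (@lebesgue_measure R `[0, t]) <= t by rewrite mul1r; exact: E.
rewrite lebesgue_measure_itv /= lte_fin.
by case: ltP => [_|]; rewrite /= ?subr0 // => /(le_trans t0) ->.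
Qed.

Lemma integ0_lin (a : R -> R) (c : R) t : loc_integrable a -> 0 <= t ->
  integ0 (fun s => (a s - c) * ind sigma p s) t =
  integ0 (fun s => a s * ind sigma p s) t - c * tau sigma p t.
Proof.
move=> ai t0; rewrite /integ0 /tau /integ0.
rewrite -RintegralZl; [|exact: mitv|exact: (@integ_ind _ _ sigma p sw _ t0)].
rewrite -RintegralB; [|exact: mitv|exact: (@integ_aind _ _ sigma p sw _ _ ai t0)|].
  by apply: eq_Rintegral => x _; rewrite mulrBl.
have := integrableZl (mitv `[0, t]) c (@integ_ind _ _ sigma p sw _ t0).
by apply: eq_integrable; [exact: mitv| move=> x _].
Qed.


Lemma integ0_lin2 (a : R -> R) (c : R) t : loc_integrable a -> 0 <= t ->
  integ0 (fun s => (c - a s) * ind sigma p s) t =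
  c * tau sigma p t - integ0 (fun s => a s * ind sigma p s) t.
Proof.
move=> ai t0; rewrite /integ0 /tau /integ0.
rewrite -RintegralZl; [|exact: mitv|exact: (@integ_ind _ _ sigma p sw _ t0)].
rewrite -RintegralB; [|exact: mitv| |exact: (@integ_aind _ _ sigma p sw _ _ ai t0)].
  by apply: eq_Rintegral => x _; rewrite mulrBl.
have := integrableZl (mitv `[0, t]) c (@integ_ind _ _ sigma p sw _ t0).
by apply: eq_integrable; [exact: mitv| move=> x _].
Qed.

Lemma integ_h (a : R -> R) (c : R) (b : bool) T : loc_integrable a -> 0 <= T ->
  mu.-integrable `[0, T] (EFin \o (fun s => (if b then a s - c else c - a s) * ind sigma p s)).
Proof.
move=> ai T0.
have iZ := integrableZl (mitv `[0, T]) c (@integ_ind _ _ sigma p sw _ T0).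
have iA := @integ_aind _ _ sigma p sw _ _ ai T0.
case: b.
  have := integrableB (mitv `[0, T]) iA iZ.
  by apply: eq_integrable; [exact: mitv| move=> x _ /=; rewrite mulrBl].
have := integrableB (mitv `[0, T]) iZ iA.
by apply: eq_integrable; [exact: mitv| move=> x _ /=; rewrite mulrBl].
Qed.

Lemma F_upper (a : R -> R) (c : R) : loc_integrable a ->
  (exists s, forall t, s <= t -> sigma t = p -> a t < c) ->
  exists C, forall t, 0 <= t ->
    integ0 (fun s => a s * ind sigma p s) t <= C + c * tau sigma p t.
Proof.
move=> ai [s hs].
have s0 : 0 <= Num.max s 0 by rewrite le_max lexx orbT.
have hneg : forall x, Num.max s 0 <= x -> (a x - c) * ind sigma p x <= 0.
  move=> x; rewrite ge_max => /andP[sx _]; rewrite /ind.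
  case: eqP => [xp|_]; last by rewrite mulr0.
  by rewrite mulr1 subr_le0 ltW // hs.
have [C HC] := @core_bound _ (fun x => (a x - c) * ind sigma p x) (Num.max s 0)
  (fun T T0 => @integ_h a c true T ai T0) s0 hneg.
exists C => t t0; rewrite -lerBlDr -integ0_lin //; exact: HC.
Qed.

Lemma F_lower (a : R -> R) (c : R) : loc_integrable a ->
  (exists s, forall t, s <= t -> sigma t = p -> c < a t) ->
  exists C, forall t, 0 <= t ->
    c * tau sigma p t <= integ0 (fun s => a s * ind sigma p s) t + C.
Proof.
move=> ai [s hs].
have s0 : 0 <= Num.max s 0 by rewrite le_max lexx orbT.
have hneg : forall x, Num.max s 0 <= x -> (c - a x) * ind sigma p x <= 0.
  move=> x; rewrite ge_max => /andP[sx _]; rewrite /ind.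
  case: eqP => [xp|_]; last by rewrite mulr0.
  by rewrite mulr1 subr_le0 ltW // hs.
have [C HC] := @core_bound _ (fun x => (c - a x) * ind sigma p x) (Num.max s 0)
  (fun T T0 => @integ_h a c false T ai T0) s0 hneg.
exists C => t t0; rewrite addrC -lerBlDr -integ0_lin2 //; exact: HC.
Qed.

End Tau.

Section Asym.
Context {R : realType}.

Definition asym_le (X Y : R -> R) := forall e : R, 0 < e ->
  exists K, forall t, 0 <= t -> X t <= Y t + K + e * t.

Definition evle (f g : R -> \bar R) := forall e : R, 0 < e ->
  exists T0, forall T, T0 <= T -> (f T <= g T + e%:E)%E.

Lemma asym_le_sum (I : finType) (X Y : I -> R -> R) :
  (forall i, asym_le (X i) (Y i)) ->
  asym_le (fun t => \sum_i X i t) (fun t => \sum_i Y i t).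
Proof.
move=> H e e0; pose n : R := #|I|%:R.
have n0 : 0 <= n by rewrite /n ler0n.
pose e' := e / (n + 1).
have e'0 : 0 < e' by rewrite /e' divr_gt0 // ltr_wpDl.
have [Kf HK] := choice (fun i => H i e' e'0).
exists (\sum_i Kf i) => t t0.
apply: (@le_trans _ _ (\sum_i (Y i t + Kf i + e' * t))).
  by apply: ler_sum => i _; apply: HK.
rewrite !big_split /= sumr_const -/n -mulr_natr -/n.
rewrite lerD2l.
have -> : e' * t * n = (e - e') * t.
  rewrite /e' -mulrA [t * n]mulrC mulrA; congr (_ * _).
  by field; rewrite gt_eqF // ltr_wpDl.
by rewrite ler_wpM2r // lerBlDr lerDl ltW.
Qed.

Lemma evle_sum (I : finType) (f g : I -> R -> \bar R) :
  (forall i, evle (f i) (g i)) ->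
  evle (fun t => \sum_i f i t)%E (fun t => \sum_i g i t)%E.
Proof.
move=> H e e0; pose n : R := #|I|%:R.
have n0 : 0 <= n by rewrite /n ler0n.
pose e' := e / (n + 1).
have e'0 : 0 < e' by rewrite /e' divr_gt0 // ltr_wpDl.
have [Tf HT] := choice (fun i => H i e' e'0).
exists (\big[Num.max/0]_i Tf i) => T hT.
apply: (@le_trans _ _ (\sum_i (g i T + e'%:E))%E).
  apply: lee_sum => i _; apply: HT; apply: le_trans hT.
  exact: le_bigmax.
rewrite big_split /= sumEFin sumr_const -/n leeD2l // lee_fin.
rewrite -mulr_natr -/n /e' -mulrA ger_pMr //.
rewrite ler_pdivrMl ?mulr1 ?lerDl //; exact: ltr_wpDl.
Qed.

Lemma evle_max0 (X Y : R -> R) : asym_le X Y ->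
  evle (fun T => ((T^-1)%:E * max0 X T)%E) (fun T => ((T^-1)%:E * max0 Y T)%E).
Proof.
move=> H e e0; have [K HK] := H (e / 2) (divr_gt0 e0 (ltr0Sn _ 1)).
exists (Num.max 1 (2 * `|K| / e)) => T; rewrite ge_max => /andP[T1 TK].
have T0 : 0 < T by apply: lt_le_trans T1.
have : (max0 X T <= max0 Y T + (K + e / 2 * T)%:E)%E.
  apply: ge_ereal_sup => _ [_ [t /= tT <-] <-].
  move: tT; rewrite in_itv /= => /andP[t0 tT].
  apply: (@le_trans _ _ ((Y t)%:E + (K + e / 2 * T)%:E))%E.
    rewrite -EFinD lee_fin addrA; apply: (le_trans (HK t t0)).
    by rewrite lerD2l ler_wpM2l // divr_ge0 // ltW.
  rewrite leeD2r //; apply: ereal_sup_ubound; exists (Y t) => //.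
  by exists t => //=; rewrite in_itv /= t0.
move=> /(lee_wpmul2l (_ : (0 <= (T^-1)%:E)%E)).
rewrite muleDr ?fin_num_adde_defl // -EFinM => h; apply: le_trans (h _) _.
  by rewrite lee_fin invr_ge0 ltW.
rewrite leeD2l // lee_fin mulrDr.
have e2 : 0 <= e / 2 by rewrite divr_ge0 // ltW.
have hK' : `|K| <= e / 2 * T.
  have := ler_wpM2l e2 TK.
  by have -> : e / 2 * (2 * `|K| / e) = `|K| by field; rewrite gt_eqF.
have -> : T^-1 * (e / 2 * T) = e / 2 by field; rewrite gt_eqF.
rewrite [X in _ <= X](splitr e) lerD2r.
apply: (@le_trans _ _ (T^-1 * `|K|)); first by apply: ler_wpM2l; [rewrite invr_ge0 ltW|exact: ler_norm].
apply: (le_trans (ler_wpM2l (_ : 0 <= T^-1) hK')); first by rewrite invr_ge0 ltW.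
rewrite le_eqVlt; apply/orP; left; apply/eqP; field; rewrite gt_eqF //.
Qed.

Lemma evle_pt (X Y Z : R -> R) : asym_le X Y ->
  (forall t, 0 < t -> Z t = t^-1 * X t) ->
  evle (fun t => (Num.max (Z t) 0)%:E) (fun t => (Num.max (t^-1 * Y t) 0)%:E).
Proof.
move=> H HZ e e0; have [K HK] := H (e / 2) (divr_gt0 e0 (ltr0Sn _ 1)).
exists (Num.max 1 (2 * `|K| / e)) => T; rewrite ge_max => /andP[T1 TK].
have T0 : 0 < T by apply: lt_le_trans T1.
rewrite -EFinD lee_fin HZ //.
have e2 : 0 <= e / 2 by rewrite divr_ge0 // ltW.
have hK' : `|K| <= e / 2 * T.
  have := ler_wpM2l e2 TK.
  by have -> : e / 2 * (2 * `|K| / e) = `|K| by field; rewrite gt_eqF.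
have iT : 0 <= T^-1 by rewrite invr_ge0 ltW.
have hK : T^-1 * K <= e / 2.
  apply: (@le_trans _ _ (T^-1 * `|K|)); first by apply: ler_wpM2l; [exact: iT|exact: ler_norm].
  apply: (le_trans (ler_wpM2l iT hK')).
  rewrite le_eqVlt; apply/orP; left; apply/eqP; field; rewrite gt_eqF //.
have hX : T^-1 * X T <= T^-1 * Y T + e.
  apply: (le_trans (ler_wpM2l iT (HK T (ltW T0)))).
  rewrite !mulrDr -addrA lerD2l.
  have -> : T^-1 * (e / 2 * T) = e / 2 by field; rewrite gt_eqF.
  by rewrite [X in _ <= X](splitr e) lerD2r.
rewrite ge_max; apply/andP; split.
  by apply: (le_trans hX); rewrite lerD2r le_max lexx.
by rewrite addr_ge0 // ?le_max ?lexx ?orbT // ltW.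
Qed.

End Asym.

Section PerP.
Context {R : realType} {P : finType} (sigma : R -> P) (p : P)
  (sw : switching_signal sigma).

Lemma notPinf_bound : ~ P_inf sigma p ->
  exists M, forall t, 0 <= t -> sigma t = p -> t <= M.
Proof.
rewrite /P_inf => nP.
have ub : forall t, 0 <= t -> sigma t = p ->
    (t%:E <= ereal_sup (EFin @` [set t | (0 <= t)%R /\ sigma t = p]))%E.
  by move=> t t0 tp; apply: ereal_sup_ubound; exists t.
move: (ereal_sup _) nP ub => [r _ ub| //|_ ub].
  by exists r => t t0 tp; have := ub t t0 tp; rewrite lee_fin.
by exists 0 => t t0 tp; have := ub t t0 tp; rewrite leeNy_eq.
Qed.

Lemma notPinf_limsup (g : R -> \bar R) : ~ P_inf sigma p ->
  limsup_on [set t | sigma t = p] g = -oo%E.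
Proof.
move=> /notPinf_bound [M HM]; apply/eqP; rewrite -leeNy_eq limsup_onE.
apply: ge_ereal_inf; exists (supS [set t | sigma t = p] g (Num.max M 0 + 1)).
  by exists (Num.max M 0 + 1).
apply: ge_ereal_sup => _ [t [st tp] <-]; exfalso.
have t0 : 0 <= t by apply: le_trans st; rewrite addr_ge0 // le_max lexx orbT.
have := HM t t0 tp; apply/negP; rewrite -ltNge; apply: lt_le_trans st.
by rewrite ltr_pwDr // le_max lexx.
Qed.

Lemma notPinf_liminf (g : R -> \bar R) : ~ P_inf sigma p ->
  liminf_on [set t | sigma t = p] g = +oo%E.
Proof.
move=> /notPinf_bound [M HM]; apply/eqP; rewrite -leye_eq liminf_onE.
apply: (@le_trans _ _ (infS [set t | sigma t = p] g (Num.max M 0 + 1))); last first.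
  by apply: ereal_sup_ubound; exists (Num.max M 0 + 1).
apply: le_ereal_inf_tmp => _ [t [st tp] <-]; exfalso.
have t0 : 0 <= t by apply: le_trans st; rewrite addr_ge0 // le_max lexx orbT.
have := HM t t0 tp; apply/negP; rewrite -ltNge; apply: lt_le_trans st.
by rewrite ltr_pwDr // le_max lexx.
Qed.

Lemma notPplus_tau : ~ P_plus sigma p -> forall d, 0 < d ->
  exists K, forall t, 0 <= t -> tau sigma p t <= K + d * t.
Proof.
rewrite /P_plus => nP d d0.
have : (rho_hat sigma p < d%:E)%E.
  apply: le_lt_trans (_ : (0%:E < d%:E)%E); last by rewrite lte_fin.
  by rewrite leNgt; apply/negP.
move=> /limsup_lt [s hs].
exists (Num.max s 1) => t t0.
have K0 : 0 <= Num.max s 1 by rewrite le_max ler01 orbT.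
have [tK|Kt] := leP t (Num.max s 1).
  apply: (le_trans (@tau_le _ _ sigma p sw _ t0)); apply: (le_trans tK).
  by rewrite lerDl mulr_ge0 // ltW.
have tpos : 0 < t by apply: lt_trans Kt; apply: (lt_le_trans ltr01); rewrite le_max lexx orbT.
have := hs t _ I; rewrite /rho tpos lte_fin ltr_pdivrMr // => h.
have st : s <= t by apply: le_trans (ltW Kt); rewrite le_max lexx.
by apply: (le_trans (ltW (h st))); rewrite lerDr.
Qed.

End PerP.

Section PerP2.
Context {R : realType} {P : finType} (sigma : R -> P) (p : P)
  (sw : switching_signal sigma).

Lemma asym_upper (a : R -> R) : loc_integrable a ->
  let ah := limsup_on [set t | sigma t = p] (fun t => (a t)%:E) in
  (forall e, 0 < e -> (ah < (fine ah + e)%:E)%E) ->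
  asym_le (fun t => integ0 (fun s => a s * ind sigma p s) t)
          (fun t => if `[< P_plus sigma p >] then fine ah * tau sigma p t else 0).
Proof.
move=> ai ah hah e e0.
have [hP|hP] := pselect (P_plus sigma p).
  rewrite (asboolT hP).
  have [s hs] := limsup_lt _ _ _ (hah e e0).
  have [C HC] := @F_upper _ _ sigma p sw a (fine ah + e) ai (ex_intro _ s (fun t st tp => hs t st tp)).
  exists C => t t0.
  have h1 := HC t t0.
  have h2 : e * tau sigma p t <= e * t := ler_wpM2l (ltW e0) (@tau_le _ _ sigma p sw _ t0).
  lra.
rewrite (asboolF hP).
have [s hs] := limsup_lt _ _ _ (hah 1 ltr01).
have [C HC] := @F_upper _ _ sigma p sw a (fine ah + 1) ai (ex_intro _ s (fun t st tp => hs t st tp)).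
set c := fine ah + 1.
have d0 : 0 < e / (`|c| + 1) by rewrite divr_gt0 // ltr_wpDl.
have [K HK] := @notPplus_tau _ _ sigma p sw hP _ d0.
exists (C + `|c| * K) => t t0.
have h1 := HC t t0.
have tau0 := @tau_ge0 _ _ sigma p t.
have h2 : c * tau sigma p t <= `|c| * tau sigma p t by rewrite ler_wpM2r // ler_norm.
have h3 : `|c| * tau sigma p t <= `|c| * (K + e / (`|c| + 1) * t) by rewrite ler_wpM2l // HK.
have h4 : `|c| * (e / (`|c| + 1) * t) <= e * t.
  rewrite mulrA ler_wpM2r // mulrC -mulrA ger_pMr // mulrC ler_pdivrMr ?mul1r ?lerDl //.
rewrite mulrDr in h3; rewrite -/c in h1; lra.
Qed.

Lemma asym_lower (a : R -> R) : loc_integrable a ->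
  let ac := liminf_on [set t | sigma t = p] (fun t => (a t)%:E) in
  (forall e, 0 < e -> ((fine ac - e)%:E < ac)%E) ->
  asym_le (fun t => if `[< P_plus sigma p >] then fine ac * tau sigma p t else 0)
          (fun t => integ0 (fun s => a s * ind sigma p s) t).
Proof.
move=> ai ac hac e e0.
have [hP|hP] := pselect (P_plus sigma p).
  rewrite (asboolT hP).
  have [s hs] := liminf_gt _ _ _ (hac e e0).
  have [C HC] := @F_lower _ _ sigma p sw a (fine ac - e) ai (ex_intro _ s (fun t st tp => hs t st tp)).
  exists C => t t0.
  have h1 := HC t t0.
  have h2 : e * tau sigma p t <= e * t := ler_wpM2l (ltW e0) (@tau_le _ _ sigma p sw _ t0).
  lra.
rewrite (asboolF hP).
have [s hs] := liminf_gt _ _ _ (hac 1 ltr01).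
have [C HC] := @F_lower _ _ sigma p sw a (fine ac - 1) ai (ex_intro _ s (fun t st tp => hs t st tp)).
set c := fine ac - 1.
have d0 : 0 < e / (`|c| + 1) by rewrite divr_gt0 // ltr_wpDl.
have [K HK] := @notPplus_tau _ _ sigma p sw hP _ d0.
exists (C + `|c| * K) => t t0.
have h1 := HC t t0.
have tau0 := @tau_ge0 _ _ sigma p t.
have h2 : - (`|c| * tau sigma p t) <= c * tau sigma p t.
  by rewrite -mulNr ler_wpM2r // lerNl ler_normr lexx orbT.
have h3 : `|c| * tau sigma p t <= `|c| * (K + e / (`|c| + 1) * t) by rewrite ler_wpM2l // HK.
have h4 : `|c| * (e / (`|c| + 1) * t) <= e * t.
  rewrite mulrA ler_wpM2r // mulrC -mulrA ger_pMr // mulrC ler_pdivrMr ?mul1r ?lerDl //.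
rewrite mulrDr in h3; rewrite -/c in h1; lra.
Qed.

End PerP2.

Theorem lemma7 (R : realType) (P : finType) (m : nat)
    (sigma : R -> P) (a : 'I_m -> P -> R -> R) :
  switching_signal sigma ->
  (forall i p, loc_integrable (a i p)) ->
  let A i t := \sum_(p : P) integ0 (fun s => a i p s * ind sigma p s) t in
  let ahat i p := limsup_on [set t | sigma t = p] (fun t => (a i p t)%:E) in
  let acheck i p := liminf_on [set t | sigma t = p] (fun t => (a i p t)%:E) in
  ((forall i p, P_inf sigma p -> ahat i p \is a fin_num) ->
    (limsup_inf (fun T => \sum_(i < m) ((T^-1)%R%:E * max0 (A i) T))
     <= limsup_inf (fun T => \sum_(i < m) ((T^-1)%R%:E *
          max0 (fun t => (\sum_(p : P | `[< P_plus sigma p >])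
                           fine (ahat i p) * tau sigma p t)%R) T)))%E)
  /\
  ((forall i p, P_inf sigma p -> acheck i p \is a fin_num) ->
    (limsup_inf (fun T => \sum_(i < m) ((T^-1)%R%:E * max0 (A i) T))
     >= limsup_inf (fun T => \sum_(i < m) ((T^-1)%R%:E *
          max0 (fun t => (\sum_(p : P | `[< P_plus sigma p >])
                           fine (acheck i p) * tau sigma p t)%R) T)))%E
    /\
    (limsup_inf (fun t => (\sum_(i < m) Num.max (t^-1 * A i t) 0)%R%:E)
     >= limsup_inf (fun t => (\sum_(i < m)
          Num.max (\sum_(p : P | `[< P_plus sigma p >])
                     fine (acheck i p) * rho sigma p t) 0)%R%:E))%E).
Proof.
move=> sw ai A ahat acheck; split.
  move=> hfin.
  have hah : forall i p e, 0 < e -> (ahat i p < (fine (ahat i p) + e)%:E)%E.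
    move=> i p e e0; have [hP|hP] := pselect (P_inf sigma p).
      by rewrite -[X in (X < _)%E](fineK (hfin i p hP)) lte_fin ltrDl.
    by rewrite /ahat (@notPinf_limsup _ _ sigma p _ hP) ltNyr.
  have HA : forall i, asym_le (A i) (fun t => \sum_(p : P | `[< P_plus sigma p >])
                           fine (ahat i p) * tau sigma p t).
    move=> i.
    have := @asym_le_sum _ P _ _ (fun p => @asym_upper _ _ sigma p sw (a i p) (ai i p) (hah i p)).
    move=> H e e0; have [K HK] := H e e0; exists K => t t0.
    by rewrite big_mkcond; apply: HK.
  apply: limsup_compare.
  exact: (evle_sum _ _ _ (fun i => @evle_max0 _ _ _ (HA i))).
move=> hfin.
have hac : forall i p e, 0 < e -> ((fine (acheck i p) - e)%:E < acheck i p)%E.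
  move=> i p e e0; have [hP|hP] := pselect (P_inf sigma p).
    by rewrite -[X in (_ < X)%E](fineK (hfin i p hP)) lte_fin gtrBl.
  by rewrite /acheck (@notPinf_liminf _ _ sigma p _ hP) ltry.
have HD : forall i, asym_le (fun t => \sum_(p : P | `[< P_plus sigma p >])
                         fine (acheck i p) * tau sigma p t) (A i).
  move=> i.
  have := @asym_le_sum _ P _ _ (fun p => @asym_lower _ _ sigma p sw (a i p) (ai i p) (hac i p)).
  move=> H e e0; have [K HK] := H e e0; exists K => t t0.
  by rewrite big_mkcond; apply: HK.
split.
  apply: limsup_compare.
  exact: (evle_sum _ _ _ (fun i => @evle_max0 _ _ _ (HD i))).
apply: limsup_compare.
have HZ : forall i, evle
    (fun t => (Num.max (\sum_(p : P | `[< P_plus sigma p >])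
                     fine (acheck i p) * rho sigma p t) 0)%:E)
    (fun t => (Num.max (t^-1 * A i t) 0)%:E).
  move=> i; apply: (@evle_pt _ _ _ _ (HD i)) => t t0.
  rewrite mulr_sumr; apply: eq_bigr => p _.
  by rewrite /rho t0 mulrA mulrC.
move=> e e0; have [T0 HT] := evle_sum _ _ _ HZ e e0.
exists T0 => T hT; rewrite -!sumEFin; exact: HT.
Qed.
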